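(* Let $\hat Q_i:\mathcal X\times\mathcal A\to[0,1]$ and let $\pi_i^{(t)}$, $\bar Q_i^{(t)}$, $\bar\pi$ be produced by the GAMD inner loop (as in the context) for $T$ iterations. Then for every player $i$ and context $x$, $$\hat V_i^{\dagger,\bar\pi_{-i}}(x)-\hat V_i^{\bar\pi}(x)\le\max_{\pi_i\in\Delta(\mathcal A_i)}\frac1T\sum_{t=1}^Tf_{i,x}^{(t)}(\pi_i)-\frac1T\sum_{t=1}^Tf_{i,x}^{(t)}(\pi_i^{(t)}(\cdot|x))\le\mathcal O\!\left(\frac{\eta(1+\log T)}{T}\right),$$ where $f_{i,x}^{(t)}(\pi_i)=\sum_{a_i}\pi_i(a_i)\bar Q_i^{(t)}(x,a_i)-\eta^{-1}\mathrm{KL}(\pi_i\|\pi_i^{\mathrm{ref}}(\cdot|x))$.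
   Context: $m$-player game with contexts $x$, finite action sets $\mathcal A_i$, $\mathcal A=\prod_i\mathcal A_i$, full-support reference policies $\pi_i^{\mathrm{ref}}$, $\eta>0$. GAMD inner loop: $\pi_i^{(1)}=\pi_i^{\mathrm{ref}}$; $\bar Q_i^{(t)}(x,a_i)=\mathbb E_{\boldsymbol a_{-i}\sim\prod_{j\ne i}\pi_j^{(t)}(\cdot|x)}[\hat Q_i(x,a_i,\boldsymbol a_{-i})]$; $\pi_i^{(t+1)}(a_i|x)\propto(\pi_i^{\mathrm{ref}}(a_i|x))^{1/t}(\pi_i^{(t)}(a_i|x))^{(t-1)/t}\exp(\frac\eta t\bar Q_i^{(t)}(x,a_i))$; $\bar\pi(\boldsymbol a|x)=\frac1T\sum_{t=1}^T\prod_i\pi_i^{(t)}(a_i|x)$, with marginals $\bar\pi_i,\bar\pi_{-i}$. Empirical values: for a joint policy $\pi$, $\hat V_i^\pi(x)=\mathbb E_{\boldsymbol a\sim\pi(\cdot|x)}[\hat Q_i(x,\boldsymbol a)]-\eta^{-1}\mathrm{KL}(\pi_i(\cdot|x)\|\pi_i^{\mathrm{ref}}(\cdot|x))$; $\hat V_i^{\dagger,\nu_{-i}}(x)=\max_{\pi_i'}\hat V_i^{(\pi_i',\nu_{-i})}(x)$, where $(\pi_i',\nu_{-i})$ is the joint policy $\pi_i'(a_i|x)\nu_{-i}(\boldsymbol a_{-i}|x)$. $\mathcal O$ hides an absolute constant. *)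

(* Defs.v *)
From HB Require Import structures.
From mathcomp Require Import all_boot all_order all_algebra.
From mathcomp Require Import all_classical all_reals all_analysis.
Unset Printing Implicit Defensive.
Import Order.TTheory GRing.Theory Num.Theory.
Local Open Scope ring_scope.
Local Open Scope classical_set_scope.

Section GAMD.
Variables (R : realType) (m : nat) (A : 'I_m -> finType).

Definition joint := {dffun forall i : 'I_m, A i}.

Definition is_dist {T : finType} (p : T -> R) : Prop :=
  (forall a, 0 <= p a) /\ \sum_a p a = 1.

(* KL(p || q) = sum_a p(a) log(p(a)/q(a))  (0 log 0 = 0 since 0 * _ = 0) *)
Definition KL {T : finType} (p q : T -> R) : R :=
  \sum_a p a * ln (p a / q a).

Definition marg_i (i : 'I_m) (sigma : joint -> R) : A i -> R :=
  fun ai => \sum_(b : joint | b i == ai) sigma b.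

(* marginal of the other players -i of sigma, evaluated at the (-i)-part of b *)
Definition marg_mi (i : 'I_m) (sigma : joint -> R) : joint -> R :=
  fun b => \sum_(c : joint | [forall j, (j != i) ==> (c j == b j)]) sigma c.

Definition prod_pol (i : 'I_m) (p : A i -> R) (nu_mi : joint -> R) : joint -> R :=
  fun b => p (b i) * nu_mi b.

Variables (X : Type) (Qhat : forall i : 'I_m, X -> joint -> R)
          (pref : forall i : 'I_m, X -> A i -> R) (eta : R).

Definition Vhat (i : 'I_m) (x : X) (sigma : joint -> R) : R :=
  \sum_b sigma b * Qhat i x b - eta^-1 * KL (marg_i i sigma) (pref i x).

Definition Vdagger (i : 'I_m) (x : X) (nu_mi : joint -> R) : R :=
  sup [set v | exists p : A i -> R, is_dist p /\ v = Vhat i x (prod_pol i p nu_mi)].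

Definition Qbar_of (pols : forall j : 'I_m, X -> A j -> R)
    (i : 'I_m) (x : X) (ai : A i) : R :=
  \sum_(b : joint | b i == ai)
     (\prod_(j | j != i) pols j x (b j)) * Qhat i x b.

Definition gamd_step (t : nat) (pols : forall j : 'I_m, X -> A j -> R) :
    forall j : 'I_m, X -> A j -> R :=
  fun j x aj =>
    let w := fun a : A j =>
      pref j x a `^ (t%:R^-1) * pols j x a `^ ((t%:R - 1) / t%:R)
        * expR (eta / t%:R * Qbar_of pols j x a) in
    w aj / \sum_a w a.

(* pol n = pi^{(n+1)};  pol 0 = pi^{(1)} = pi^ref *)
Fixpoint pol (n : nat) : forall j : 'I_m, X -> A j -> R :=
  match n with
  | 0 => pref
  | n'.+1 => gamd_step n'.+1 (pol n')
  end.

Definition Qbar (n : nat) (i : 'I_m) (x : X) : A i -> R := Qbar_of (pol n) i x.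

Definition pibar (T : nat) (x : X) : joint -> R :=
  fun b => T%:R^-1 * \sum_(n < T) \prod_i pol n i x (b i).

Definition f_ix (n : nat) (i : 'I_m) (x : X) (p : A i -> R) : R :=
  \sum_a p a * Qbar n i x a - eta^-1 * KL p (pref i x).

Definition regret (T : nat) (i : 'I_m) (x : X) : R :=
  sup [set v | exists p : A i -> R, is_dist p /\
         v = T%:R^-1 * \sum_(n < T) f_ix n i x p]
  - T%:R^-1 * \sum_(n < T) f_ix n i x (pol n i x).

End GAMD.

(* Main.v *)
Require Import Defs.
From HB Require Import structures.
From mathcomp Require Import all_boot all_order all_algebra.
From mathcomp Require Import all_classical all_reals all_analysis.
From mathcomp Require Import ring lra.
Import Order.TTheory GRing.Theory Num.Theory.
Local Open Scope ring_scope.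
Lemma prod_sum_dep (R : comNzRingType) (I : finType) (T_ : I -> finType)
  (G : forall i, T_ i -> R) :
  \prod_i \sum_(a : T_ i) G i a = \sum_(f : {dffun forall i, T_ i}) \prod_i G i (f i).
Proof.
pose F := fun (_ : I) (u : {i : I & T_ i}) => G (tag u) (tagged u).
have E1 i : \sum_(a : T_ i) G i a = \sum_(u | tagged_with T_ i u) F i u.
  rewrite [RHS](eq_bigl (fun u => u \in tagged_with T_ i)) //.
  rewrite [RHS]big_sub /=.
  rewrite [RHS](reindex (tag_with i)); last exact/onW_bij/tag_with_bij.
  by apply: eq_big => // a.
under eq_bigr => i _ do rewrite E1.
rewrite (bigA_distr_big_dep (fun i => tagged_with T_ i) F).
rewrite [LHS]big_sub /=.
rewrite [LHS](reindex (fun g => to_family_tagged_with (fprod_of_dffun g))); last first.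
  apply/onW_bij/(bij_comp (to_family_tagged_with_bij _)).
  exact: fprod_of_dffun_bij.
apply: eq_big => // g _.
apply: eq_bigr => i _; rewrite /F /= ffunE /=.
by [].
Qed.
Lemma Tagged_eqE (I : eqType) (T_ : I -> eqType) (i : I) (u v : T_ i) :
  (Tagged T_ u == Tagged T_ v) = (u == v).
Proof. by apply/eqP/eqP => [H|->]; [exact: eq_from_Tagged H|]. Qed.

Section Prod.
Variables (R : realType) (m : nat) (A : 'I_m -> finType).

Lemma sum_cond_prod (i : 'I_m) (a : A i) (p : forall j, A j -> R) :
  \sum_(b : joint m A | b i == a) \prod_(j | j != i) p j (b j)
  = \prod_(j | j != i) \sum_c p j c.
Proof.
pose G := fun j (c : A j) => if j == i then (Tagged A c == Tagged A a)%:R else p j c.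
have := @prod_sum_dep _ _ _ G; rewrite -/(joint m A) => E.
transitivity (\sum_(b : joint m A) \prod_j G j (b j)).
  rewrite big_mkcond /=; apply: eq_bigr => b _.
  rewrite [RHS](bigD1 i) //= /G eqxx Tagged_eqE.
  rewrite [in RHS](eq_bigr (fun j => p j (b j))); last by move=> j /negbTE ->.
  by case: (b i == a); rewrite ?mul1r ?mul0r.
rewrite -E (bigD1 i) //= /G eqxx.
rewrite (eq_bigr (fun j => \sum_c p j c)); last by move=> j /negbTE ->.
rewrite (bigD1 a) //= Tagged_eqE eqxx big1 ?addr0 ?mul1r // => c hc.
by rewrite Tagged_eqE (negbTE hc).
Qed.

Lemma sum_agree_prod (i : 'I_m) (b : joint m A) (p : forall j, A j -> R) :
  \sum_(c : joint m A | [forall j, (j != i) ==> (c j == b j)]) \prod_j p j (c j)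
  = (\sum_c p i c) * \prod_(j | j != i) p j (b j).
Proof.
pose G := fun j (c : A j) =>
  if j == i then p j c else (Tagged A c == Tagged A (b j))%:R * p j c.
have := @prod_sum_dep _ _ _ G; rewrite -/(joint m A) => E.
transitivity (\sum_(c : joint m A) \prod_j G j (c j)).
  rewrite big_mkcond /=; apply: eq_bigr => c _.
  rewrite [RHS](bigD1 i) //= /G eqxx.
  case: ifP => [/forallP H|/negbT].
    rewrite (bigD1 i) //=; congr (_ * _); apply: eq_bigr => j hj.
    by rewrite (negbTE hj) Tagged_eqE (implyP (H j) hj) mul1r.
  rewrite negb_forall => /existsP [j0]; rewrite negb_imply => /andP [hj0 hc].
  rewrite (bigD1 j0) //= (negbTE hj0) Tagged_eqE (negbTE hc).
  by rewrite mul0r mul0r mulr0.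
rewrite -E (bigD1 i) //= /G eqxx; congr (_ * _); apply: eq_bigr => j hj.
rewrite (negbTE hj) (bigD1 (b j)) //= Tagged_eqE eqxx mul1r big1 ?addr0 // => c hc.
by rewrite Tagged_eqE (negbTE hc) mul0r.
Qed.

End Prod.
Lemma sum_pos_gt0 (R : realType) (T : finType) (F G : T -> R) :
  (forall a, 0 < F a) -> \sum_a G a = 1 -> 0 < \sum_a F a.
Proof.
move=> hF hG; case: (pickP (@predT T)) => [a _|e].
  rewrite (bigD1 a) //=; apply: ltr_pwDl (hF a) _.
  by apply: sumr_ge0 => b _; exact: ltW.
by move: hG; rewrite big_pred0 // => /eqP; rewrite eq_sym oner_eq0.
Qed.

Lemma powR_pos (R : realType) (a r : R) : 0 < a -> a `^ r = expR (r * ln a).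
Proof. by move=> ha; rewrite /powR gt_eqF. Qed.


Lemma p1n_gt0 (R : realType) n : (0:R) < 1 + n%:R.
Proof. have := ler0n R n; lra. Qed.
Section KLlemmas.
Variables (R : realType) (T : finType).
Local Notation KL := (@KL R T).

Lemma KL_term (p q r : R) : 0 <= p -> 0 < q -> 0 < r ->
  p * ln (p / q) = p * ln (p / r) + p * ln (r / q).
Proof.
move=> hp0 hq hr; have [->|hp] := eqVneq p 0; first by rewrite !mul0r addr0.
have hp' : 0 < p by rewrite lt_neqAle eq_sym hp hp0.
rewrite -mulrDr -lnM ?posrE ?divr_gt0 //; congr (_ * ln _).
by field; rewrite !lt0r_neq0.
Qed.

Lemma KL_split (p q r : T -> R) : (forall a, 0 <= p a) -> (forall a, 0 < q a) ->
  (forall a, 0 < r a) -> KL p q = KL p r + \sum_a p a * ln (r a / q a).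
Proof.
by move=> hp hq hr; rewrite /KL -big_split; apply: eq_bigr => a _; rewrite (@KL_term _ _ (r a)) ?hp ?hq ?hr.
Qed.

Lemma KL_ext (p p' q : T -> R) : (forall a, p a = p' a) -> KL p q = KL p' q.
Proof. by move=> h; rewrite /KL; apply: eq_bigr => a _; rewrite h. Qed.

Lemma KL_self (p : T -> R) : KL p p = 0.
Proof.
rewrite /KL big1 // => a _; have [->|h] := eqVneq (p a) 0; first by rewrite mul0r.
by rewrite divff // ln1 mulr0.
Qed.

Lemma gibbs_term (p q : R) : 0 <= p -> 0 < q -> p - q <= p * ln (p / q).
Proof.
move=> hp0 hq; have [->|hp] := eqVneq p 0; first by rewrite mul0r sub0r oppr_le0 ltW.
have hp' : 0 < p by rewrite lt_neqAle eq_sym hp hp0.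
have h1 : ln (q / p) <= q / p - 1.
  have := @le_ln1Dx R (q / p - 1); rewrite (addrC 1) subrK; apply.
  have := divr_gt0 hq hp'; lra.
have -> : ln (p / q) = - ln (q / p).
  by rewrite -lnV ?posrE ?divr_gt0 // invf_div.
rewrite mulrN; have : p * ln (q / p) <= p * (q / p - 1) by rewrite ler_wpM2l // ltW.
rewrite mulrBr mulr1 mulrCA divff ?lt0r_neq0 // mulr1 => h; lra.
Qed.

Lemma KL_ge0 (p q : T -> R) : (forall a, 0 <= p a) -> \sum_a p a = 1 ->
  (forall a, 0 < q a) -> \sum_a q a = 1 -> 0 <= KL p q.
Proof.
move=> hp hp1 hq hq1; rewrite /KL.
apply: (@le_trans _ _ (\sum_a (p a - q a))); last first.
  by apply: ler_sum => a _; exact: gibbs_term.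
by rewrite sumrB hp1 hq1 subrr.
Qed.

End KLlemmas.

Lemma KL_avg (R : realType) (S : finType) (T : nat) (hT : (0 < T)%N)
  (P : 'I_T -> S -> R) (q : S -> R) :
  (forall n a, 0 < P n a) -> (forall n, \sum_a P n a = 1) ->
  (forall a, 0 < q a) ->
  @KL R S (fun a => T%:R^-1 * \sum_(n < T) P n a) q
   <= T%:R^-1 * \sum_(n < T) @KL R S (P n) q.
Proof.
move=> hP hP1 hq.
set pb := fun a => T%:R^-1 * \sum_(n < T) P n a.
have hT' : (0 : R) < T%:R by rewrite ltr0n.
have hpb a : 0 < pb a.
  rewrite /pb mulr_gt0 ?invr_gt0 // (bigD1 (Ordinal hT)) //=.
  by apply: ltr_pwDl (hP _ a) _; apply: sumr_ge0 => n _; exact: ltW.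
have hpb1 : \sum_a pb a = 1.
  rewrite /pb -mulr_sumr exchange_big /=.
  under eq_bigr => n _ do rewrite hP1.
  by rewrite sumr_const card_ord mulVf ?lt0r_neq0.
have E : \sum_(n < T) @KL R S (P n) q
   = \sum_(n < T) @KL R S (P n) pb + T%:R * @KL R S pb q.
  rewrite (eq_bigr (fun n => @KL R S (P n) pb + \sum_a P n a * ln (pb a / q a))); last first.
    by move=> n _; apply: KL_split => // a; exact: ltW.
  rewrite big_split /=; congr (_ + _).
  rewrite exchange_big /= /KL mulr_sumr; apply: eq_bigr => a _.
  rewrite -big_distrl /= mulrA; congr (_ * _).
  by rewrite /pb mulrA mulfV ?lt0r_neq0 // mul1r.
rewrite E mulrDr mulrA mulVf ?lt0r_neq0 // mul1r lerDr.
apply: mulr_ge0; first by rewrite invr_ge0 ltW.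
apply: sumr_ge0 => n _; apply: KL_ge0 => // a; exact: ltW.
Qed.

Lemma harmonic (R : realType) T : (0 < T)%N ->
  \sum_(n < T) (n.+1%:R : R)^-1 <= 1 + ln (T%:R : R).
Proof.
case: T => // T _; elim: T => [|T IH].
  by rewrite big_ord_recr big_ord0 /= add0r invr1 ln1 addr0.
rewrite big_ord_recr /=.
suff H : (T.+2%:R : R)^-1 <= ln (T.+2%:R : R) - ln (T.+1%:R).
  apply: (le_trans (lerD IH H)); rewrite le_eqVlt; apply/orP; left; apply/eqP; ring.
have h1 : (0 : R) < T.+1%:R by rewrite ltr0n.
have h2 : (0 : R) < T.+2%:R by rewrite ltr0n.
have hd : ln (T.+1%:R / T.+2%:R : R) <= T.+1%:R / T.+2%:R - 1.
  have := @le_ln1Dx R (T.+1%:R / T.+2%:R - 1); rewrite (addrC 1) subrK; apply.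
  have := divr_gt0 h1 h2; set u := (T.+1%:R / T.+2%:R : R); move=> ?; lra.
rewrite ln_div ?posrE // in hd.
have e : (T.+1%:R / T.+2%:R : R) - 1 = - T.+2%:R^-1.
  rewrite -[T.+2%:R]natr1; by field; rewrite lt0r_neq0 // natr1.
rewrite e in hd; set a := ln (T.+2%:R : R) in hd *; set b := ln (T.+1%:R : R) in hd *.
set c := (T.+2%:R^-1 : R) in hd *; lra.
Qed.
Section Gibbs.
Variables (R : realType) (m : nat) (A : 'I_m -> finType) (X : Type)
  (Qhat : forall i : 'I_m, X -> joint m A -> R)
  (pref : forall i : 'I_m, X -> A i -> R) (eta : R).
Hypothesis hpp : forall i x a, 0 < pref i x a.
Hypothesis hpd : forall i x, is_dist R (pref i x).

Local Notation pol := (@pol R m A X Qhat pref eta).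
Local Notation Qbar := (@Qbar R m A X Qhat pref eta).

Definition Ssum n j x a := \sum_(k < n) Qbar k j x a.
Definition Lg n j x a := ln (pref j x a) + eta * n%:R^-1 * Ssum n j x a.
Definition Zg n j x := \sum_a expR (Lg n j x a).

Lemma Zg_gt0 n j x : 0 < Zg n j x.
Proof. apply: (@sum_pos_gt0 R _ _ (pref j x)) => [b|]; [exact: expR_gt0|by case: (hpd j x)]. Qed.

Lemma Lg_step n j x a :
  n.+1%:R^-1 * ln (pref j x a) + (n.+1%:R - 1) / n.+1%:R * (Lg n j x a - ln (Zg n j x))
   + eta / n.+1%:R * Qbar n j x a
  = Lg n.+1 j x a - n%:R / n.+1%:R * ln (Zg n j x).
Proof.
rewrite /Lg /Ssum big_ord_recr /= -natr1 addrK.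
case: n => [|n].
  by rewrite big_ord0 add0r invr1; ring.
have h0 : (0:R) <= n%:R by exact: ler0n.
have hn : (1 + n%:R : R) != 0 by apply: lt0r_neq0; lra.
have hn2 : (1 + n%:R + 1 : R) != 0 by apply: lt0r_neq0; lra.
by field; rewrite hn hn2.
Qed.

Lemma pol_gibbs n j x a : pol n j x a = expR (Lg n j x a) / Zg n j x.
Proof.
elim: n j x a => [|n IH] j x a.
  have E b : expR (Lg 0 j x b) = pref j x b.
    by rewrite /Lg /Ssum big_ord0 mulr0 addr0 lnK ?posrE ?hpp.
  rewrite /= /Zg E; under eq_bigr => b _ do rewrite E.
  by rewrite (proj2 (hpd j x)) divr1.
have hpol b : 0 < pol n j x b by rewrite IH divr_gt0 ?expR_gt0 ?Zg_gt0.
have hlnpol b : ln (pol n j x b) = Lg n j x b - ln (Zg n j x).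
  by rewrite IH ln_div ?posrE ?expR_gt0 ?Zg_gt0 // expRK.
have hw b : pref j x b `^ (n.+1%:R^-1) * pol n j x b `^ ((n.+1%:R - 1) / n.+1%:R)
     * expR (eta / n.+1%:R * Qbar n j x b)
   = expR (Lg n.+1 j x b) * expR (- (n%:R / n.+1%:R * ln (Zg n j x))).
  rewrite !powR_pos ?hpp ?hpol // -!expRD hlnpol.
  congr expR; rewrite -Lg_step; ring.
rewrite /= /gamd_step.

rewrite hw.
under eq_bigr => b _ do rewrite hw.
rewrite -big_distrl /= -/(Zg n.+1 j x).
have h1 := expR_gt0 (- (n%:R / n.+1%:R * ln (Zg n j x))).
by field; rewrite !lt0r_neq0 ?Zg_gt0.
Qed.

Hypothesis hQ : forall i x b, 0 <= Qhat i x b <= 1.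
Hypothesis heta : 0 < eta.

Lemma pol_gt0 n j x a : 0 < pol n j x a.
Proof. by rewrite pol_gibbs divr_gt0 ?expR_gt0 ?Zg_gt0. Qed.

Lemma pol_sum1 n j x : \sum_a pol n j x a = 1.
Proof.
under eq_bigr => a _ do rewrite pol_gibbs.
by rewrite -big_distrl /= -/(Zg n j x) divff // lt0r_neq0 ?Zg_gt0.
Qed.

Lemma ln_pol n j x a : ln (pol n j x a) = Lg n j x a - ln (Zg n j x).
Proof. by rewrite pol_gibbs ln_div ?posrE ?expR_gt0 ?Zg_gt0 // expRK. Qed.

Lemma Qbar_bounds n i x a : 0 <= Qbar n i x a <= 1.
Proof.
rewrite /Qbar /Qbar_of; apply/andP; split.
  apply: sumr_ge0 => b _; apply: mulr_ge0; last by case/andP: (hQ i x b).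
  by apply: prodr_ge0 => j _; exact: ltW (pol_gt0 _ _ _ _).
apply: (@le_trans _ _ (\sum_(b : joint m A | b i == a) \prod_(j | j != i) pol n j x (b j))).
  apply: ler_sum => b _; rewrite -[X in _ <= X]mulr1; apply: ler_wpM2l.
    by apply: prodr_ge0 => j _; exact: ltW (pol_gt0 _ _ _ _).
  by case/andP: (hQ i x b).
rewrite (@sum_cond_prod _ _ _ i a (fun j => pol n j x)) big1 // => j _; exact: pol_sum1.
Qed.

Local Notation KL := (@KL R).
Local Notation f_ix := (@f_ix R m A X Qhat pref eta).

Lemma Ssum_bounds n i x a : 0 <= Ssum n i x a <= n%:R.
Proof.
rewrite /Ssum; apply/andP; split.
  by apply: sumr_ge0 => k _; case/andP: (Qbar_bounds k i x a).
apply: (@le_trans _ _ (\sum_(k < n) (1 : R))).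
  by apply: ler_sum => k _; case/andP: (Qbar_bounds k i x a).
by rewrite sumr_const card_ord.
Qed.

Lemma nSsum N i x a : N%:R * eta^-1 * (eta * N%:R^-1 * Ssum N i x a) = Ssum N i x a.
Proof.
case: N => [|N]; first by rewrite /Ssum big_ord0 !mulr0.
have h0 : (N.+1%:R : R) != 0 by rewrite pnatr_eq0.
by field; rewrite !lt0r_neq0 ?p1n_gt0.
Qed.

Lemma sumf_gibbs N i x (p : A i -> R) : is_dist R p ->
  \sum_(n < N) f_ix n i x p
  = N%:R * eta^-1 * ln (Zg N i x) - N%:R * eta^-1 * KL p (pol N i x).
Proof.
move=> [hp hp1].
have E1 : \sum_(n < N) f_ix n i x p
    = \sum_a p a * Ssum N i x a - N%:R * eta^-1 * KL p (pref i x).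
  rewrite /f_ix big_split /= sumrN; congr (_ - _).
    rewrite exchange_big /=; apply: eq_bigr => a _.
    by rewrite /Ssum big_distrr.
  by rewrite sumr_const card_ord -mulrA mulr_natl.
rewrite E1 (@KL_split _ _ _ _ (pol N i x)) //; last by move=> a; exact: pol_gt0.
have E2 a : p a * ln (pol N i x a / pref i x a)
   = p a * (eta * N%:R^-1 * Ssum N i x a) - p a * ln (Zg N i x).
  rewrite ln_div ?posrE ?pol_gt0 ?hpp // ln_pol /Lg; ring.
have E2' : \sum_a p a * ln (pol N i x a / pref i x a)
   = \sum_a (p a * (eta * N%:R^-1 * Ssum N i x a) - p a * ln (Zg N i x)).
  by apply: eq_bigr => a _; exact: E2.
rewrite E2'.
have E3 : N%:R * eta^-1 * \sum_a (p a * (eta * N%:R^-1 * Ssum N i x a) - p a * ln (Zg N i x))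
   = \sum_a p a * Ssum N i x a - N%:R * eta^-1 * ln (Zg N i x).
  rewrite sumrB mulrBr; congr (_ - _).
    rewrite mulr_sumr; apply: eq_bigr => a _; rewrite mulrCA nSsum //.
  by rewrite -big_distrl /= hp1 mul1r.
rewrite mulrDr E3; ring.
Qed.


Lemma pol_dist n j x : is_dist R (pol n j x).
Proof. by split; [move=> a; exact: ltW (pol_gt0 _ _ _ _)|exact: pol_sum1]. Qed.

Lemma sumf_pol N i x :
  \sum_(n < N) f_ix n i x (pol n i x)
  = N%:R * eta^-1 * ln (Zg N i x)
    - \sum_(n < N) (n.+1%:R * eta^-1 * KL (pol n i x) (pol n.+1 i x)).
Proof.
elim: N => [|N IH]; first by rewrite !big_ord0 !mul0r subr0.
rewrite !big_ord_recr /= IH.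
have H1 := sumf_gibbs N.+1 i x (pol N i x) (pol_dist N i x).
have H0 := sumf_gibbs N i x (pol N i x) (pol_dist N i x).
rewrite big_ord_recr /= H0 KL_self in H1.
have -> : f_ix N i x (pol N i x)
   = N.+1%:R * eta^-1 * ln (Zg N.+1 i x) - N.+1%:R * eta^-1 * KL (pol N i x) (pol N.+1 i x)
     - (N%:R * eta^-1 * ln (Zg N i x) - N%:R * eta^-1 * 0).
  by rewrite -H1; ring.
ring.
Qed.

Lemma expR_le_quad (y : R) : -(1/2) <= y <= 1/2 -> expR y <= 1 + y + 2 * y ^+ 2.
Proof.
move=> /andP [h1 h2].
have hF : 1 - y <= expR (- y) by have := expR_ge1Dx (- y); rewrite -[1 - y]/(1 + - y).
have hEF : expR y * expR (- y) = 1 := expRxMexpNx_1 y.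
have hE : 0 < expR y := expR_gt0 y.
have hB : 1 <= (1 + y + 2 * y ^+ 2) * (1 - y).
  have : 0 <= y ^+ 2 * (1 - 2 * y) by apply: mulr_ge0; [exact: sqr_ge0| lra].
  move=> h; rewrite expr2 in h *; nra.
have hy : 0 < 1 - y by lra.
have : expR y * (1 - y) <= (1 + y + 2 * y ^+ 2) * (1 - y).
  apply: (le_trans _ hB); rewrite -[leRHS]hEF.
  by apply: ler_wpM2l; [exact: ltW hE|exact: hF].
by rewrite ler_pM2r.
Qed.

Lemma Lg_diff n i x a :
  Lg n.+1 i x a - Lg n i x a
  = eta / n.+1%:R * (Qbar n i x a - n%:R^-1 * Ssum n i x a).
Proof.
rewrite /Lg {1}/Ssum big_ord_recr /= -/(Ssum n i x a).
case: n => [|n]; first by rewrite /Ssum big_ord0; ring.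
have h0 := p1n_gt0 R n.
by field; rewrite !lt0r_neq0 ?p1n_gt0 // -[X in _ < X]addrA -natr1 addrC p1n_gt0.
Qed.

Lemma ninvS_le1 n i x a : 0 <= n%:R^-1 * Ssum n i x a <= 1.
Proof.
have /andP [h1 h2] := Ssum_bounds n i x a.
case: n h1 h2 => [|n] h1 h2; first by rewrite invr0 mul0r lexx ler01.
apply/andP; split; first by apply: mulr_ge0; rewrite // invr_ge0 ler0n.
by rewrite mulrC ler_pdivrMr ?mul1r // ltr0n.
Qed.


Lemma KL_step n i x :
  KL (pol n i x) (pol n.+1 i x)
  = ln (\sum_a pol n i x a * expR (Lg n.+1 i x a - Lg n i x a))
    - \sum_a pol n i x a * (Lg n.+1 i x a - Lg n i x a).
Proof.
set g := fun a => Lg n.+1 i x a - Lg n i x a.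
set M := \sum_a pol n i x a * expR (g a).
have hM : M * Zg n i x = Zg n.+1 i x.
  rewrite /M big_distrl /=; rewrite [in RHS]/Zg; apply: eq_bigr => a _.
  rewrite pol_gibbs /g expRB.
  have := expR_gt0 (Lg n i x a); have := Zg_gt0 n i x.
  by move=> h1 h2; field; rewrite !lt0r_neq0.
have hMp : 0 < M.
  apply: (@sum_pos_gt0 R _ _ (pol n i x)) => [a|]; last exact: pol_sum1.
  by rewrite mulr_gt0 ?pol_gt0 ?expR_gt0.
have hlnZ : ln (Zg n.+1 i x) = ln M + ln (Zg n i x).
  by rewrite -hM lnM ?posrE ?Zg_gt0.
rewrite /KL.
have E a : pol n i x a * ln (pol n i x a / pol n.+1 i x a)
   = pol n i x a * ln M - pol n i x a * g a.
  rewrite ln_div ?posrE ?pol_gt0 // !ln_pol hlnZ /g; ring.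
rewrite (eq_bigr _ (fun a _ => E a)) sumrB -big_distrl /= pol_sum1 mul1r //.
Qed.

Lemma D_bound n i x :
  n.+1%:R * eta^-1 * KL (pol n i x) (pol n.+1 i x) <= 4 * (eta / n.+1%:R).
Proof.
set h := eta / n.+1%:R.
have hh : 0 < h by rewrite divr_gt0 // ltr0n.
have -> : n.+1%:R * eta^-1 = h^-1 by rewrite /h invf_div.
suff HK : KL (pol n i x) (pol n.+1 i x) <= 4 * h * h.
  apply: (@le_trans _ _ (h^-1 * (4 * h * h))).
    by rewrite ler_wpM2l // invr_ge0 ltW.
  by rewrite le_eqVlt; apply/orP; left; apply/eqP; field; rewrite lt0r_neq0.
rewrite KL_step.
set g := fun a => Lg n.+1 i x a - Lg n i x a.
set M := \sum_a pol n i x a * expR (g a).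
have hg a : - h <= g a <= h.
  rewrite /g Lg_diff -/h.
  have /andP [q1 q2] := Qbar_bounds n i x a.
  have /andP [s1 s2] := ninvS_le1 n i x a.
  set d := Qbar n i x a - n%:R^-1 * Ssum n i x a.
  have h1 : 0 <= h * (1 - d) by apply: mulr_ge0; [exact: ltW|rewrite /d; lra].
  have h2 : 0 <= h * (d + 1) by apply: mulr_ge0; [exact: ltW|rewrite /d; lra].
  apply/andP; split; nra.
have hMp : 0 < M.
  apply: (@sum_pos_gt0 R _ _ (pol n i x)) => [a|]; last exact: pol_sum1.
  by rewrite mulr_gt0 ?pol_gt0 ?expR_gt0.
have hp a : 0 <= pol n i x a := ltW (pol_gt0 n i x a).
have [hsmall|hbig] := leP h (1/2).
  have hlnM : ln M <= M - 1.
    have := @le_ln1Dx R (M - 1); rewrite (addrC 1) subrK; apply; lra.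
  have hE : M - 1 - \sum_a pol n i x a * g a
      = \sum_a pol n i x a * (expR (g a) - 1 - g a).
    rewrite /M -[X in _ - X - _](pol_sum1 n i x) -!sumrB; apply: eq_bigr => a _; ring.
  suff : \sum_a pol n i x a * (expR (g a) - 1 - g a) <= 2 * h * h.
    move=> H; have : 0 <= h * h by rewrite mulr_ge0 // ltW.
    lra.
  apply: (@le_trans _ _ (\sum_a pol n i x a * (2 * h * h))).
    apply: ler_sum => a _; apply: ler_wpM2l => //.
    have /andP [g1 g2] := hg a.
    have := @expR_le_quad (g a) (ltac:(apply/andP; split; lra)).
    have : 0 <= (h - g a) * (h + g a) by apply: mulr_ge0; lra.
    rewrite expr2; nra.
  by rewrite -big_distrl /= pol_sum1 mul1r.
have hlnM : ln M <= h.
  have hMe : M <= expR h.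
    apply: (@le_trans _ _ (\sum_a pol n i x a * expR h)).
      apply: ler_sum => a _; apply: ler_wpM2l => //.
      by rewrite ler_expR; case/andP: (hg a).
    by rewrite -big_distrl /= pol_sum1 mul1r.
  by rewrite -[leRHS]expRK ler_ln ?posrE ?expR_gt0.
have hEg : - h <= \sum_a pol n i x a * g a.
  apply: (@le_trans _ _ (\sum_a pol n i x a * (- h))).
    by rewrite -big_distrl /= pol_sum1 mul1r.
  apply: ler_sum => a _; apply: ler_wpM2l => //; by case/andP: (hg a).
nra.
Qed.


Variables (T : nat) (i : 'I_m) (x : X).
Hypothesis hT : (0 < T)%N.
Local Notation pibar := (@pibar R m A X Qhat pref eta T x).
Local Notation marg_mi := (@marg_mi R m A i).
Local Notation marg_i := (@marg_i R m A i).
Local Notation prod_pol := (@prod_pol R m A i).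
Local Notation Vhat := (@Vhat R m A X Qhat pref eta i x).

Lemma sig_sum1 n a :
  \sum_(b : joint m A | b i == a) \prod_(j | j != i) pol n j x (b j) = 1.
Proof.
by rewrite (@sum_cond_prod _ _ _ i a (fun j => pol n j x)) big1 // => j _; exact: pol_sum1.
Qed.

Lemma sumQ n (p : A i -> R) :
  \sum_(b : joint m A) p (b i) * \prod_(j | j != i) pol n j x (b j) * Qhat i x b
  = \sum_a p a * Qbar n i x a.
Proof.
rewrite (partition_big (fun b : joint m A => b i) predT) //=.
apply: eq_bigr => a _; rewrite /Qbar /Qbar_of big_distrr /=.
by apply: eq_big => [b|b /= /eqP <-]; [|rewrite mulrA].
Qed.

Lemma pibar_eq b : pibar b
  = T%:R^-1 * \sum_(n < T) pol n i x (b i) * \prod_(j | j != i) pol n j x (b j).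
Proof. by rewrite /pibar; congr (_ * _); apply: eq_bigr => n _; rewrite (bigD1 i). Qed.

Lemma nu_eq b : marg_mi pibar b
  = T%:R^-1 * \sum_(n < T) \prod_(j | j != i) pol n j x (b j).
Proof.
rewrite /marg_mi /pibar -mulr_sumr exchange_big /=; congr (_ * _).
apply: eq_bigr => n _.
by rewrite (@sum_agree_prod _ _ _ i b (fun j => pol n j x)) pol_sum1 mul1r.
Qed.

Lemma hTr : (T%:R : R) != 0.
Proof. by rewrite lt0r_neq0 // ltr0n. Qed.

Lemma Vhat_prod p : is_dist R p ->
  Vhat (prod_pol p (marg_mi pibar)) = T%:R^-1 * \sum_(n < T) f_ix n i x p.
Proof.
move=> [hp hp1].
have hm a : marg_i (prod_pol p (marg_mi pibar)) a = p a.
  rewrite /marg_i /prod_pol.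
  rewrite (eq_bigr (fun b => p a * marg_mi pibar b)); last by move=> b /eqP ->.
  rewrite -big_distrr /=.
  under eq_bigr => b _ do rewrite nu_eq.
  rewrite -mulr_sumr exchange_big /=.
  under eq_bigr => n _ do rewrite sig_sum1.
  by rewrite sumr_const card_ord mulVf ?hTr // mulr1.
rewrite /Vhat (@KL_ext R (A i) _ p (pref i x) hm).
have E : \sum_b prod_pol p (marg_mi pibar) b * Qhat i x b
   = T%:R^-1 * \sum_(n < T) \sum_a p a * Qbar n i x a.
  under [in RHS]eq_bigr => n _ do rewrite -sumQ.
  rewrite exchange_big /= mulr_sumr; apply: eq_bigr => b _.
  rewrite /prod_pol nu_eq !mulr_sumr big_distrl /=; apply: eq_bigr => n _; ring.
rewrite E /f_ix sumrB mulrBr; congr (_ - _).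
rewrite sumr_const card_ord -(mulr_natl (eta^-1 * KL p (pref i x)) T).
by rewrite [RHS]mulrA mulVf ?hTr // mul1r.
Qed.

Lemma Vhat_pibar : T%:R^-1 * \sum_(n < T) f_ix n i x (pol n i x) <= Vhat pibar.
Proof.
have hm a : marg_i pibar a = T%:R^-1 * \sum_(n < T) pol n i x a.
  rewrite /marg_i.
  under eq_bigr => b _ do rewrite pibar_eq.
  rewrite -mulr_sumr exchange_big /=; congr (_ * _); apply: eq_bigr => n _.
  rewrite (eq_bigr (fun b : joint m A => pol n i x a * \prod_(j | j != i) pol n j x (b j))); last first.
    by move=> b /eqP ->.
  by rewrite -big_distrr /= sig_sum1 mulr1.
rewrite /Vhat (@KL_ext R (A i) _ _ (pref i x) hm).
have E : \sum_b pibar b * Qhat i x b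
   = T%:R^-1 * \sum_(n < T) \sum_a pol n i x a * Qbar n i x a.
  under [in RHS]eq_bigr => n _ do rewrite -sumQ.
  rewrite exchange_big /= mulr_sumr; apply: eq_bigr => b _.
  rewrite pibar_eq !mulr_sumr big_distrl /=; apply: eq_bigr => n _; ring.
rewrite E /f_ix sumrB mulrBr.
apply: lerB => //.
have H := @KL_avg R (A i) T hT (fun n : 'I_T => pol n i x) (pref i x)
  (fun n a => pol_gt0 n i x a) (fun n => pol_sum1 n i x) (hpp i x).
rewrite -mulr_sumr mulrCA; apply: ler_wpM2l; last exact: H.
by rewrite invr_ge0 ltW.
Qed.


Local Notation Vdagger := (@Vdagger R m A X Qhat pref eta i x).
Local Notation regret := (@regret R m A X Qhat pref eta T i x).

Local Open Scope classical_set_scope.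
Lemma main_ineqs :
  Vdagger (marg_mi pibar) - Vhat pibar <= regret
  /\ regret <= (4%N)%:R * (eta * (1 + ln (T%:R : R)) / T%:R).
Proof.
set E := [set v | exists p : A i -> R, is_dist R p /\
            v = T%:R^-1 * \sum_(n < T) f_ix n i x p].
have Eset : [set v | exists p : A i -> R, is_dist R p /\
            v = Vhat (prod_pol p (marg_mi pibar))] = E.
  by apply/seteqP; split => v [p [hp ->]]; exists p; split => //; rewrite Vhat_prod.
have hT' : (0 : R) < T%:R by rewrite ltr0n.
split.
  rewrite /Vdagger Eset /regret -/E; apply: lerB => //; exact: Vhat_pibar.
rewrite /regret -/E.
have hsup : sup E <= T%:R^-1 * (T%:R * eta^-1 * ln (Zg T i x)).
  apply: ge_sup.
    exists (T%:R^-1 * \sum_(n < T) f_ix n i x (pref i x)); exists (pref i x).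
    by split => //; exact: hpd.
  move=> v [p [hp ->]]; rewrite (sumf_gibbs T i x p hp); apply: ler_wpM2l.
    by rewrite invr_ge0 ltW.
  rewrite lerBlDr lerDl; apply: mulr_ge0.
    by apply: mulr_ge0; [exact: ler0n|rewrite invr_ge0; exact: ltW heta].
  case: hp => hp1 hp2.
  apply: KL_ge0 => //; [exact: pol_gt0|exact: pol_sum1].
have hD : \sum_(n < T) (n.+1%:R * eta^-1 * KL (pol n i x) (pol n.+1 i x))
   <= (4%N)%:R * eta * (1 + ln (T%:R : R)).
  apply: (@le_trans _ _ (\sum_(n < T) (4%N)%:R * (eta / n.+1%:R))).
    by apply: ler_sum => n _; exact: D_bound.
  rewrite -mulr_sumr -mulrA; apply: ler_wpM2l; first by rewrite ler0n.
  rewrite -mulr_sumr; apply: ler_wpM2l; [exact: ltW|exact: harmonic].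
rewrite sumf_pol.
set S := \sum_(n < T) _ in hD *.
set Lz := T%:R * eta^-1 * ln (Zg T i x) in hsup *.
apply: (@le_trans _ _ (T%:R^-1 * S)).
  rewrite mulrBr; set s := sup E in hsup *; set u := T%:R^-1 * Lz in hsup *.
  set w := T%:R^-1 * S; lra.
have hS : T%:R^-1 * S <= T%:R^-1 * ((4%N)%:R * eta * (1 + ln (T%:R : R))).
  by apply: ler_wpM2l => //; rewrite invr_ge0 ltW.
apply: (le_trans hS); rewrite le_eqVlt; apply/orP; left; apply/eqP.
by field; rewrite lt0r_neq0.
Qed.

End Gibbs.


Theorem mainTheorem11 :
  exists C : nat,
  forall (R : realType) (m : nat) (A : 'I_m -> finType) (X : Type)
         (Qhat : forall i : 'I_m, X -> joint m A -> R)
         (pref : forall i : 'I_m, X -> A i -> R) (eta : R) (T : nat),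
    (forall i x b, 0 <= Qhat i x b <= 1) ->
    (forall i x, is_dist R (pref i x)) ->
    (forall i x a, 0 < pref i x a) ->
    0 < eta ->
    (0 < T)%N ->
    forall (i : 'I_m) (x : X),
      @Vdagger R m A X Qhat pref eta i x
          (@marg_mi R m A i (@pibar R m A X Qhat pref eta T x))
        - @Vhat R m A X Qhat pref eta i x (@pibar R m A X Qhat pref eta T x)
        <= @regret R m A X Qhat pref eta T i x
      /\ @regret R m A X Qhat pref eta T i x
        <= C%:R * (eta * (1 + ln (T%:R : R)) / T%:R).
Proof.
exists 4%N => R m A X Qhat pref eta T hQ hpd hpp heta hT i x.
exact: main_ineqs.
Qed.
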